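(* Let $R$ be a dp-minimal integral domain with maximal ideal $\mathfrak M$. Then every prime ideal $\mathfrak p\neq\mathfrak M$ of $R$ is strongly prime.
   Context: Rings are commutative with identity; dp-minimal means the theory in the language of rings has dp-rank $1$ (such domains are local). An ideal $\mathfrak p$ of a domain $R$ is strongly prime if for all $x,y\in\mathrm{Frac}(R)$, $xy\in\mathfrak p$ implies $x\in\mathfrak p$ or $y\in\mathfrak p$. *)

(* Defs.v *)
From HB Require Import structures.
From mathcomp Require Import all_boot all_order all_algebra.
From mathcomp Require Import fraction.
Set Implicit Arguments. Unset Strict Implicit. Unset Printing Implicit Defensive.
Import GRing.Theory.
Local Open Scope ring_scope.

Section Ideals.
Variable R : comNzRingType.

Definition is_ideal (I : R -> Prop) : Prop :=
  I 0 /\ (forall x y, I x -> I y -> I (x + y)) /\ (forall r x, I x -> I (r * x)).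

Definition is_prime_ideal (P : R -> Prop) : Prop :=
  is_ideal P /\ ~ P 1 /\ (forall x y, P (x * y) -> P x \/ P y).

Definition is_maximal_ideal (M : R -> Prop) : Prop :=
  is_ideal M /\ ~ M 1 /\
  (forall J : R -> Prop, is_ideal J -> (forall x, M x -> J x) ->
     (forall x, J x <-> M x) \/ J 1).
End Ideals.

Definition in_frac (R : idomainType) (p : R -> Prop) (z : {fraction R}) : Prop :=
  exists r : R, p r /\ @FracField.tofrac R r = z.

Definition strongly_prime (R : idomainType) (p : R -> Prop) : Prop :=
  forall x y : {fraction R},
    in_frac p (x * y) -> in_frac p x \/ in_frac p y.

(* Formulas of the language of rings: MathComp first-order ring formulas
   (GRing.formula) containing no constants from R (only numerals). The
   extra symbols Inv / Unit are definable in the language of rings. *)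
Fixpoint term_noconst (R : Type) (t : GRing.term R) : bool :=
  match t with
  | GRing.Var _ => true
  | GRing.Const _ => false
  | GRing.NatConst _ => true
  | GRing.Add t1 t2 => term_noconst t1 && term_noconst t2
  | GRing.Opp t1 => term_noconst t1
  | GRing.NatMul t1 _ => term_noconst t1
  | GRing.Mul t1 t2 => term_noconst t1 && term_noconst t2
  | GRing.Inv t1 => term_noconst t1
  | GRing.Exp t1 _ => term_noconst t1
  end.

Fixpoint formula_noconst (R : Type) (f : GRing.formula R) : bool :=
  match f with
  | GRing.Bool _ => true
  | GRing.Equal t1 t2 => term_noconst t1 && term_noconst t2
  | GRing.Unit t1 => term_noconst t1
  | GRing.And f1 f2 => formula_noconst f1 && formula_noconst f2
  | GRing.Or f1 f2 => formula_noconst f1 && formula_noconst f2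
  | GRing.Implies f1 f2 => formula_noconst f1 && formula_noconst f2
  | GRing.Not f1 => formula_noconst f1
  | GRing.Exists _ f1 => formula_noconst f1
  | GRing.Forall _ f1 => formula_noconst f1
  end.

(* A formula phi(x; y) is read with object variable x = 'X_0 and parameter
   variables y = 'X_1, 'X_2, ...; phi(c; a) holds iff GRing.holds (c :: a) phi. *)

Definition ICT_pattern_n (R : unitRingType) (phi psi : GRing.formula R) (n : nat) : Prop :=
  exists (a b : nat -> seq R),
    forall i0 j0, (i0 < n)%N -> (j0 < n)%N ->
      exists c : R, forall i j, (i < n)%N -> (j < n)%N ->
        (GRing.holds (c :: a i) phi <-> i = i0) /\
        (GRing.holds (c :: b j) psi <-> j = j0).

(* Th(R) has dp-rank <= 1 (dp-minimal): there is no ICT pattern of depth 2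
   in a single variable; by compactness this is equivalent to: for each pair
   of formulas, finite patterns do not exist in R for some length n. *)
Definition dp_minimal (R : unitRingType) : Prop :=
  forall phi psi : GRing.formula R,
    formula_noconst phi -> formula_noconst psi ->
    exists n : nat, ~ ICT_pattern_n phi psi n.

(* Main.v *)
Require Import Defs.
From HB Require Import structures.
From mathcomp Require Import all_boot all_order all_algebra.
From mathcomp Require Import fraction generic_quotient.
From Stdlib Require Import Classical.
From mathcomp Require Import ring.
Set Implicit Arguments.
Import GRing.Theory.
Local Open Scope ring_scope.

Section Aux.
Variable R : idomainType.

Definition dv (a x : R) := exists z, x = a * z.

Definition phiF : GRing.formula R :=
  GRing.Exists 3 (GRing.Equal (GRing.Add (GRing.Var _ 0) (GRing.Opp (GRing.Var _ 1)))
                              (GRing.Mul (GRing.Var _ 2) (GRing.Var _ 3))).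

Lemma holds_phiF c e b : GRing.holds [:: c; e; b] phiF <-> dv b (c - e).
Proof. by simpl; split=> [[z ->]|[z ->]]; exists z. Qed.

Lemma dvF : dp_minimal R -> exists N, forall (a b : R) (e f : nat -> R),
  (forall i, dv a (e i)) -> (forall j, dv b (f j)) ->
  (forall i i', (i < i')%N -> (i' < N)%N -> ~ dv b (e i - e i')) ->
  (forall j j', (j < j')%N -> (j' < N)%N -> ~ dv a (f j - f j')) -> False.
Proof.
move=> H; have [N hN] := H phiF phiF erefl erefl.
exists N => a b e f ea fb de df; apply: hN.
have key : forall (x y : R) (g : nat -> R),
    (forall i i', (i < i')%N -> (i' < N)%N -> ~ dv x (g i - g i')) ->
    forall i i', (i < N)%N -> (i' < N)%N -> dv x (g i - g i') -> i = i'.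
  move=> x y g dg i i' hi hi' [z hz].
  case: (ltngtP i i') => // h.
  - by case: (dg i i' h hi'); exists z.
  - by case: (dg i' i h hi); exists (- z); rewrite mulrN -hz opprB.
exists (fun i => [:: e i; b]), (fun j => [:: f j; a]) => i0 j0 hi0 hj0.
exists (e i0 + f j0) => i j hi hj; split; rewrite holds_phiF.
- split=> [[z hz]|->].
  + have [bb hbb] := fb j0.
    apply: esym; apply: (key b b e de i0 i) => //; exists (z - bb).
    by rewrite mulrBr -hz -hbb addrAC addrK.
  + by rewrite addrAC subrr add0r.
- split=> [[z hz]|->].
  + have [aa haa] := ea i0.
    apply: esym; apply: (key a a f df j0 j) => //; exists (z - aa).
    rewrite mulrBr -hz -haa; ring.
  + by rewrite addrK.
Qed.

Lemma frac_repr (x : {fraction R}) :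
  exists a s : R, s != 0 /\ x = (FracField.tofrac a) / (FracField.tofrac s).
Proof.
elim/quotW: x => r.
exists (\n_r), (\d_r); split; first exact: denom_ratioP.
have hd : FracField.tofrac (\d_r) != 0 by rewrite tofrac_eq0 denom_ratioP.
apply: (mulIf hd); rewrite divfK //.
unlock FracField.tofrac.
rewrite !piE.
apply/eqmodP => /=; rewrite FracField.equivfE /FracField.mulf !numden_Ratio ?mulf_neq0 ?oner_neq0 ?denom_ratioP // ; apply/eqP; by rewrite !mulr1 mulrC.
Qed.

Definition unit (x : R) := exists w, w * x = 1.

Lemma dv_cong (x q : R) : dv x (q - 1) -> forall q', dv x (q' - 1) -> dv x (q * q' - 1).
Proof.
move=> [y hy] q' [y' hy']; exists (q * y' + y).
by rewrite mulrDr mulrCA -hy' -hy mulrBr mulr1 addrA subrK.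
Qed.

Lemma dv_cong_exp (x q : R) : dv x (q - 1) -> forall n, dv x (q ^+ n - 1).
Proof.
move=> h; elim=> [|n IH]; first by exists 0; rewrite expr0 subrr mulr0.
by rewrite exprS; apply: dv_cong.
Qed.

Lemma dv_cong_1m (x : R) d : (0 < d)%N -> dv x ((1 - x ^+ d) - 1).
Proof.
case: d => // d _; exists (- x ^+ d).
by rewrite addrAC subrr add0r exprS mulrN.
Qed.

Lemma lemD (x q : R) i N : x != 0 -> ~ unit x -> (i < N)%N -> dv x (q - 1) ->
  dv (x ^+ N) (x ^+ i * q) -> False.
Proof.
move=> x0 nu iN [y hy] [z hz]; apply: nu.
have hq : q = x ^+ (N - i) * z.
  apply: (mulfI (expf_neq0 i x0)).
  by rewrite hz mulrA -exprD subnKC // ltnW.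
have e : (N - i = (N - i).-1.+1)%N by rewrite prednK // subn_gt0.
exists (x ^+ (N - i).-1 * z - y).
have hx : x ^+ (N - i) = x ^+ (N - i).-1 * x by rewrite -exprSr -e.
have -> : (x ^+ (N - i).-1 * z - y) * x = q - (q - 1) by rewrite hy hq hx; ring.
ring.
Qed.

Variables (M p : R -> Prop).
Hypothesis dpm : dp_minimal R.
Hypothesis HM : is_maximal_ideal M.
Hypothesis Hp : is_prime_ideal p.

Lemma id_opp (I : R -> Prop) : is_ideal I -> forall x, I x -> I (- x).
Proof. by move=> [_ [_ hm]] x hx; rewrite -mulN1r; apply: hm. Qed.

Lemma id_mulr (I : R -> Prop) : is_ideal I -> forall x r, I x -> I (x * r).
Proof. by move=> [_ [_ hm]] x r hx; rewrite mulrC; apply: hm. Qed.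

Lemma id_unit (I : R -> Prop) : is_ideal I -> ~ I 1 -> forall x, I x -> ~ unit x.
Proof. by move=> hI n1 x hx [w hw]; apply: n1; rewrite -hw; apply: hI.2.2. Qed.

Lemma id_exp (I : R -> Prop) : is_ideal I -> forall x d, (0 < d)%N -> I x -> I (x ^+ d).
Proof. by move=> hI x [|d] // _ hx; rewrite exprS; apply: id_mulr. Qed.

Lemma M_1m m d : (0 < d)%N -> M m -> ~ M (1 - m ^+ d).
Proof.
move=> d0 hm h; apply: HM.2.1.
have := HM.1.2.1 _ _ h (id_exp HM.1 _ _ d0 hm); by rewrite subrK.
Qed.

Lemma local u : ~ M u -> unit u.
Proof.
move=> nMu.
pose J := fun x => exists mm r, M mm /\ x = mm + r * u.
have hJ : is_ideal J.
  split; first by exists 0, 0; split; [exact: HM.1.1 | rewrite mul0r addr0].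
  split.
  - move=> x y [m1 [r1 [h1 ->]]] [m2 [r2 [h2 ->]]]; exists (m1 + m2), (r1 + r2).
    split; first by apply: HM.1.2.1.
    by rewrite mulrDl addrACA.
  - move=> r x [m1 [r1 [h1 ->]]]; exists (r * m1), (r * r1); split.
    by apply: HM.1.2.2.
    by rewrite mulrDr mulrA.
have sub : forall x, M x -> J x by move=> x hx; exists x, 0; split; [exact: hx | rewrite mul0r addr0].
case: (HM.2.2 J hJ sub) => [h|[m [r [hm e1]]]].
  by case: nMu; apply/h; exists 0, 1; split; [exact: HM.1.1 | rewrite add0r mul1r].
set t := r * u in e1.
have [N hN] := dvF dpm.
have mnu : ~ unit m := id_unit HM.1 HM.2.1 hm.
case: (classic (unit t)) => [[w hw]|tnu].
  by exists (w * r); rewrite -mulrA.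
have t0 : t != 0.
  apply/eqP=> t0; apply: mnu; exists 1; by rewrite mul1r e1 t0 addr0.
have m0 : m != 0.
  apply/eqP=> m0; apply: tnu; exists 1; by rewrite mul1r e1 m0 add0r.
have mt : m = 1 - t by rewrite e1 addrK.
exfalso; apply: (hN (m ^+ N) (t ^+ N) (fun i => m ^+ N * t ^+ i) (fun j => t ^+ N * m ^+ j)).
- by move=> i; exists (t ^+ i).
- by move=> j; exists (m ^+ j).
- move=> i i' ii' i'N hd.
  apply: (@lemD t (m ^+ N * (1 - t ^+ (i' - i))) i N t0 tnu (ltn_trans ii' i'N)).
    apply: dv_cong; last by apply: dv_cong_1m; rewrite subn_gt0.
    apply: dv_cong_exp; exists (-1); by rewrite mt addrAC subrr add0r mulrN1.
  move: hd; set d := (i' - i)%N; rewrite -(subnKC (ltnW ii')) -/d.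
  have -> : m ^+ N * t ^+ i - m ^+ N * t ^+ (i + d) = t ^+ i * (m ^+ N * (1 - t ^+ d)).
    by rewrite exprD; ring.
  by [].
- move=> j j' jj' j'N hd.
  have ht : t = 1 - m by rewrite mt opprB addrC subrK.
  apply: (@lemD m (t ^+ N * (1 - m ^+ (j' - j))) j N m0 mnu (ltn_trans jj' j'N)).
    apply: dv_cong; last by apply: dv_cong_1m; rewrite subn_gt0.
    apply: dv_cong_exp; exists (-1); by rewrite ht addrAC subrr add0r mulrN1.
  move: hd; set d := (j' - j)%N; rewrite -(subnKC (ltnW jj')) -/d.
  have -> : t ^+ N * m ^+ j - t ^+ N * m ^+ (j + d) = m ^+ j * (t ^+ N * (1 - m ^+ d)).
    by rewrite exprD; ring.
  by [].
Qed.

Lemma pM x : p x -> M x.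
Proof.
move=> px; apply: NNPP => nM; have [w hw] := local nM.
by apply: Hp.2.1; rewrite -hw; apply: Hp.1.2.2.
Qed.

Lemma p_exp x k : p (x ^+ k) -> p x.
Proof.
elim: k => [|k IH]; first by rewrite expr0 => h; case: Hp.2.1.
by rewrite exprS => /Hp.2.2 [].
Qed.

Lemma np_1m m d : (0 < d)%N -> M m -> ~ p (1 - m ^+ d).
Proof. by move=> d0 hm /pM; apply: M_1m. Qed.

Lemma np_mul x y : ~ p x -> ~ p y -> ~ p (x * y).
Proof. by move=> nx ny /Hp.2.2 []. Qed.

Lemma claim v m : p v -> M m -> ~ p m -> dv m v.
Proof.
move=> pv hm npm; apply: NNPP => nd.
have m0 : m != 0 by apply/eqP => m0; apply: npm; rewrite m0; exact: Hp.1.1.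
have [N hN] := dvF dpm.
apply: (hN (m ^+ N) v (fun i => m ^+ N * m ^+ i) (fun j => v * m ^+ j)).
- by move=> i; exists (m ^+ i).
- by move=> j; exists (m ^+ j).
- move=> i i' ii' i'N [z hz].
  move: hz; set d := (i' - i)%N; rewrite -(subnKC (ltnW ii')) -/d.
  have -> : m ^+ N * m ^+ i - m ^+ N * m ^+ (i + d) = (m ^+ N * m ^+ i) * (1 - m ^+ d).
    by rewrite exprD; ring.
  move=> hz.
  have : p (v * z) by apply: (id_mulr Hp.1).
  rewrite -hz; apply: np_mul; last by apply: np_1m => //; rewrite subn_gt0.
  by rewrite -exprD => /p_exp.
- move=> j j' jj' j'N [z hz].
  move: hz; set d := (j' - j)%N; rewrite -(subnKC (ltnW jj')) -/d.
  have -> : v * m ^+ j - v * m ^+ (j + d) = m ^+ j * v * (1 - m ^+ d).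
    by rewrite exprD; ring.
  have [w hw] : unit (1 - m ^+ d).
    by apply: local; apply: M_1m => //; rewrite subn_gt0.
  move=> hz.
  have e0 : m ^+ j * v = m ^+ N * (z * w).
    have -> : m ^+ j * v = (m ^+ j * v * (1 - m ^+ d)) * w.
      by rewrite -mulrA [(1 - _) * w]mulrC hw mulr1.
    by rewrite hz mulrA.
  have e1 : m ^+ j * v = m ^+ j * (m ^+ (N - j) * (z * w)).
    by rewrite e0 [RHS]mulrA -exprD subnKC // ltnW // (ltn_trans jj' j'N).
  have e2 := mulfI (expf_neq0 j m0) e1.
  have e : (N - j = (N - j).-1.+1)%N by rewrite prednK // subn_gt0 (ltn_trans jj' j'N).
  apply: nd; exists (m ^+ (N - j).-1 * (z * w)).
  by rewrite e2 [RHS]mulrA -exprS -e.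
Qed.

Lemma valuation (m : R) a s : M m -> ~ p m ->
  (exists w, ~ p w /\ dv s (a * w)) \/ (exists w, ~ p w /\ dv a (s * w)).
Proof.
move=> hm npm; apply: NNPP => H.
have [N hN] := dvF dpm.
apply: (hN a s (fun i => a * m ^+ i) (fun j => s * m ^+ j)).
- by move=> i; exists (m ^+ i).
- by move=> j; exists (m ^+ j).
- move=> i i' ii' i'N hz.
  move: hz; set d := (i' - i)%N; rewrite -(subnKC (ltnW ii')) -/d.
  have -> : a * m ^+ i - a * m ^+ (i + d) = a * (m ^+ i * (1 - m ^+ d)).
    by rewrite exprD; ring.
  move=> hz; apply: H; left; exists (m ^+ i * (1 - m ^+ d)); split => //.
  apply: np_mul; first by move/p_exp.
  by apply: np_1m => //; rewrite subn_gt0.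
- move=> j j' jj' j'N hz.
  move: hz; set d := (j' - j)%N; rewrite -(subnKC (ltnW jj')) -/d.
  have -> : s * m ^+ j - s * m ^+ (j + d) = s * (m ^+ j * (1 - m ^+ d)).
    by rewrite exprD; ring.
  move=> hz; apply: H; right; exists (m ^+ j * (1 - m ^+ d)); split => //.
  apply: np_mul; first by move/p_exp.
  by apply: np_1m => //; rewrite subn_gt0.
Qed.

Local Notation tf := (@FracField.tofrac R).

Lemma nz_of_np w : ~ p w -> w != 0.
Proof. by move=> h; apply/eqP => w0; apply: h; rewrite w0; exact: Hp.1.1. Qed.

Lemma in_frac_of (m : R) g w : M m -> ~ p m -> p g -> ~ p w -> in_frac p (tf g / tf w).
Proof.
move=> hm npm pg npw.
have w0 := nz_of_np npw.
have [g' hg] : dv w g.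
  case: (classic (M w)) => [hMw|nMw]; first exact: claim.
  have [u hu] := local nMw; exists (u * g); by rewrite mulrA [w * u]mulrC hu mul1r.
exists g'; split.
  by move: pg; rewrite hg => /Hp.2.2 [].
by rewrite hg tofracM [tf w * _]mulrC mulfK // tofrac_eq0.
Qed.

Lemma repr2 (m : R) (z : {fraction R}) : M m -> ~ p m ->
  (exists g w, ~ p w /\ z = tf g / tf w) \/
  (exists h w, p h /\ ~ p w /\ z * (tf h / tf w) = 1).
Proof.
move=> hm npm.
have [a [s [s0 ->]]] := frac_repr z.
have tfs0 : tf s != 0 by rewrite tofrac_eq0.
case: (valuation a s hm npm) => [[w [npw [g hg]]]|[w [npw [h hh]]]].
- left; exists g, w; split => //.
  apply/eqP; rewrite eqr_div // ?tofrac_eq0 ?nz_of_np //.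
  by rewrite -!tofracM tofrac_eq hg mulrC.
- case: (classic (p h)) => [ph|nph].
  + right; exists h, w; split => //; split => //.
    have a0 : a != 0.
      apply/eqP => a0; move: hh; rewrite a0 mul0r => /eqP; rewrite mulf_eq0.
      by rewrite (negbTE s0) (negbTE (nz_of_np npw)).
    rewrite mulf_div -!tofracM -hh divff // tofrac_eq0 mulf_neq0 // nz_of_np //.
  + left; exists w, h; split => //.
    apply/eqP; rewrite eqr_div // ?tofrac_eq0 ?nz_of_np //.
    by rewrite -!tofracM tofrac_eq -hh mulrC.
Qed.

Lemma strong (m : R) : M m -> ~ p m -> strongly_prime p.
Proof.
move=> hm npm x y [r [pr hr]].
case: (repr2 x hm npm) => [[g [w [npw hx]]]|[h [w [ph [npw hx]]]]].
- case: (repr2 y hm npm) => [[g' [w' [npw' hy]]]|[h [w2 [ph [npw2 hy]]]]].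
  + have e : g * g' = r * (w * w').
      apply/eqP; rewrite -tofrac_eq !tofracM hr hx hy mulf_div.
      by rewrite divfK // -tofracM tofrac_eq0 mulf_neq0 // nz_of_np.
    have : p (g * g') by rewrite e; by apply: (id_mulr Hp.1).
    case/Hp.2.2 => [pg|pg'].
    * by left; rewrite hx; apply: (in_frac_of hm npm).
    * by right; rewrite hy; apply: (in_frac_of hm npm).
  + left.
    have -> : x = x * y * (tf h / tf w2) by rewrite -mulrA hy mulr1.
    rewrite -hr mulrA -tofracM; apply: (in_frac_of hm npm) => //.
    by by apply: (id_mulr Hp.1).
- right.
  have -> : y = x * y * (tf h / tf w) by rewrite [x * y]mulrC -mulrA hx mulr1.
  rewrite -hr mulrA -tofracM; apply: (in_frac_of hm npm) => //.
  by by apply: (id_mulr Hp.1).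
Qed.

End Aux.

Theorem mainTheorem14 (R : idomainType) (M p : R -> Prop) :
  dp_minimal R ->
  is_maximal_ideal M ->
  is_prime_ideal p ->
  ~ (forall x, p x <-> M x) ->
  strongly_prime p.
Proof.
move=> dpm HM Hp hne.
have [m [hm npm]] : exists m, M m /\ ~ p m.
  apply: NNPP => H; apply: hne => x; split; first exact: (pM dpm HM Hp).
  by move=> hx; apply: NNPP => nx; apply: H; exists x.
exact: (strong dpm HM Hp _ hm npm).
Qed.
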